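(* Let $p_1,\dots,p_r,q_1,\dots,q_s$ be positive integers with $\sum_ip_i=\sum_jq_j$, set $k=r+s$ and $(a_1,\dots,a_k)=(p_1,\dots,p_r,-q_1,\dots,-q_s)$, and $\epsilon=(-1)^{q_1+\cdots+q_s}$. Suppose $\{1,\dots,k\}$ is a disjoint union of nonempty subsets $K_1,\dots,K_l$ such that $\sum_{i\in K_j}a_i=0$ and $\gcd\{a_i:i\in K_j\}=1$ for each $j$. Let $q$ be a prime power, $\lambda\in\mathbb{F}_q^\times$, and let $\mathcal V_\lambda(\mathbb{F}_q^\times)$ be the set of points of $\mathbb{P}^{|K_1|-1}(\mathbb{F}_q)\times\cdots\times\mathbb{P}^{|K_l|-1}(\mathbb{F}_q)$ (the $j$-th factor having homogeneous coordinates $(x_i)_{i\in K_j}$) with all coordinates nonzero satisfying $\sum_{i\in K_j}x_i=0$ for $j=1,\dots,l$ and $\lambda x_1^{a_1}\cdots x_k^{a_k}=\epsilon$. Then $$|\mathcal V_\lambda(\mathbb{F}_q^\times)|=\frac{1}{q-1}\prod_{j=1}^lQ_{|K_j|}(q)+\frac{1}{q^l(q-1)}\sum_{m=1}^{q-2}g(a_1m)\cdots g(a_km)\,\omega(\epsilon\lambda)^m,$$ where $Q_n(x)=\big((x-1)^{n-1}+(-1)^n\big)/x$.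
   Context: Fix a nontrivial additive character $\psi_q$ of $\mathbb{F}_q$, a generator $\omega$ of the character group of $\mathbb{F}_q^\times$, and $g(m)=\sum_{x\in\mathbb{F}_q^\times}\omega(x)^m\psi_q(x)$ for $m\in\mathbb{Z}$. *)

(* Defs.v *)
From HB Require Import structures.
From mathcomp Require Import all_boot all_order all_algebra all_field.
Set Implicit Arguments. Unset Strict Implicit. Unset Printing Implicit Defensive.
Import Order.TTheory GRing.Theory Num.Theory.
Local Open Scope ring_scope.

Definition avec (r s : nat) (p : 'I_r -> nat) (qs : 'I_s -> nat) (i : 'I_(r + s)) : int :=
  match split i with inl j => (p j)%:Z | inr j => - (qs j)%:Z end.

Definition is_add_char (F : finFieldType) (psi : F -> algC) : Prop :=
  (forall x y, psi (x + y) = psi x * psi y) /\ (forall x, psi x != 0).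
Definition nontriv_add_char (F : finFieldType) (psi : F -> algC) : Prop :=
  is_add_char psi /\ exists x, psi x != 1.

(* multiplicative character F^x -> C^x (values at 0 irrelevant) *)
Definition is_mult_char (F : finFieldType) (chi : F -> algC) : Prop :=
  (forall x y, x != 0 -> y != 0 -> chi (x * y) = chi x * chi y) /\
  (forall x, x != 0 -> chi x != 0).

Definition generates_char_group (F : finFieldType) (omega : F -> algC) : Prop :=
  is_mult_char omega /\
  forall chi, is_mult_char chi -> exists m : nat, forall x, x != 0 -> chi x = omega x ^+ m.

Definition gauss (F : finFieldType) (omega psi : F -> algC) (m : int) : algC :=
  \sum_(x : F | x != 0) omega x ^ m * psi x.

Definition Qpoly (n : nat) (x : algC) : algC := ((x - 1) ^+ n.-1 + (-1) ^+ n) / x.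

Definition Vsol (F : finFieldType) (k l : nat) (blk : 'I_k -> 'I_l) (a : 'I_k -> int)
  (lam eps : F) : {set {ffun 'I_k -> F}} :=
  [set x : {ffun 'I_k -> F} | [forall i, x i != 0] &&
     [forall j, \sum_(i | blk i == j) x i == 0] &&
     (lam * \prod_i x i ^ a i == eps)].

(* equivalence in P^{|K_1|-1} x ... x P^{|K_l|-1}: blockwise scaling *)
Definition proj_equiv (F : finFieldType) (k l : nat) (blk : 'I_k -> 'I_l)
  (x y : {ffun 'I_k -> F}) : bool :=
  [exists c : {ffun 'I_l -> F}, [forall j, c j != 0] && [forall i, y i == c (blk i) * x i]].

Definition Vpoints (F : finFieldType) (k l : nat) (blk : 'I_k -> 'I_l) (a : 'I_k -> int)
  (lam eps : F) : {set {set {ffun 'I_k -> F}}} :=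
  [set [set y | proj_equiv blk x y] | x in Vsol blk a lam eps].

(* Main.v *)
Require Import Defs.
From HB Require Import structures.
From mathcomp Require Import all_boot all_order all_algebra all_field.
From mathcomp Require Import ring.
Set Implicit Arguments. Unset Strict Implicit. Unset Printing Implicit Defensive.
Import Order.TTheory GRing.Theory Num.Theory.
Local Open Scope ring_scope.


Section Chars.
Variables (F : finFieldType) (psi omega : F -> algC).
Hypothesis hpsi : nontriv_add_char psi.
Hypothesis homega : generates_char_group omega.

Local Notation n := (#|F|.-1).

Lemma n_gt0 : (0 < n)%N.
Proof.
rewrite -(cardC1 (0:F)); apply/card_gt0P; exists 1; by rewrite !inE oner_neq0.
Qed.

Lemma cardF : #|F| = n.+1.
Proof. by move: n_gt0; case: #|F|. Qed.

Lemma unitn (x : F) : x != 0 -> x ^+ n = 1.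
Proof.
move=> x0; have := expf_card x; rewrite cardF exprSr => h.
by apply: (mulIf x0); rewrite h mul1r.
Qed.

Lemma omM x y : x != 0 -> y != 0 -> omega (x * y) = omega x * omega y.
Proof. by case: homega => [[h _] _]; apply: h. Qed.

Lemma om_neq0 x : x != 0 -> omega x != 0.
Proof. by case: homega => [[_ h] _]; apply: h. Qed.

Lemma om1 : omega 1 = 1.
Proof.
have h := omM (oner_neq0 F) (oner_neq0 F); rewrite mulr1 in h.
have h0 := om_neq0 (oner_neq0 F).
by apply: (mulfI h0); rewrite -h mulr1.
Qed.

Lemma omX x k : x != 0 -> omega (x ^+ k) = omega x ^+ k.
Proof.
move=> x0; elim: k => [|k IH]; first by rewrite !expr0 om1.
by rewrite !exprS omM ?expf_neq0 // IH.
Qed.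

Lemma omV x : x != 0 -> omega x^-1 = (omega x)^-1.
Proof.
move=> x0; have h := omM x0 (invr_neq0 x0); rewrite mulfV // om1 in h.
by rewrite -[RHS]mul1r h mulrC mulKf ?om_neq0.
Qed.

Lemma omz x (c : int) : x != 0 -> omega (x ^ c) = omega x ^ c.
Proof.
move=> x0; case: c => k /=; first exact: omX.
by rewrite omV ?expf_neq0 // omX.
Qed.

Lemma omn x : x != 0 -> omega x ^+ n = 1.
Proof. by move=> x0; rewrite -omX // unitn // om1. Qed.

Lemma exists_g0 : {g : F | n.-primitive_root g}.
Proof.
have : has n.-primitive_root [seq x <- enum F | x != 0].
  apply: cyclic.has_prim_root; first exact: n_gt0.
  - apply/allP => x; rewrite mem_filter => /andP [x0 _].
    by rewrite unity_rootE unitn.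
  - by rewrite filter_uniq ?enum_uniq.
  - rewrite -(cardC1 (0:F)) cardE /enum_mem size_filter /= size_filter count_filter.
    by apply: eq_leq; apply: eq_count => x; rewrite !inE andbT.
by case/hasP/sig2_eqW => g _ pg; exists g.
Qed.

Let g0 := sval exists_g0.
Let pg0 : n.-primitive_root g0 := svalP exists_g0.
Let zeta := sval (C_prim_root_exists n_gt0).
Let pz : n.-primitive_root zeta := svalP (C_prim_root_exists n_gt0).

Definition dl (x : F) : nat :=
  if [pick i : 'I_n | g0 ^+ i == x] is Some i then val i else 0%N.

Lemma dlP x : x != 0 -> g0 ^+ dl x = x.
Proof.
move=> x0; rewrite /dl; case: pickP => [i /eqP //|].
have [i ->] := prim_rootP pg0 (unitn x0).
by move/(_ i); rewrite eqxx.
Qed.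

Lemma g0_neq0 : g0 != 0.
Proof.
apply/eqP => g00; have := prim_expr_order pg0; rewrite g00 expr0n.
by rewrite eqn0Ngt n_gt0 /= => /eqP; rewrite eq_sym oner_eq0.
Qed.

Lemma z_neq0 : zeta != 0.
Proof.
apply/eqP => g00; have := prim_expr_order pz; rewrite g00 expr0n.
by rewrite eqn0Ngt n_gt0 /= => /eqP; rewrite eq_sym oner_eq0.
Qed.

Definition chi (x : F) : algC := zeta ^+ dl x.

Lemma chi_mult : is_mult_char chi.
Proof.
split=> [x y x0 y0|x _]; last by rewrite /chi expf_neq0 // z_neq0.
rewrite /chi -exprD; apply/eqP; rewrite (eq_prim_root_expr pz).
by rewrite -(eq_prim_root_expr pg0) exprD !dlP ?mulf_neq0.
Qed.

Lemma chi_g0 : chi g0 = zeta.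
Proof.
rewrite /chi -[RHS]expr1; apply/eqP; rewrite (eq_prim_root_expr pz).
by rewrite -(eq_prim_root_expr pg0) dlP ?g0_neq0 ?expr1.
Qed.

Lemma m0_ex : exists m : nat, forall x, x != 0 -> chi x = omega x ^+ m.
Proof. by case: homega => _ h; apply: h; apply: chi_mult. Qed.

Lemma om_faith y : y != 0 -> omega y = 1 -> y = 1.
Proof.
move=> y0 oy; have [m hm] := m0_ex.
have : chi y = 1 by rewrite hm // oy expr1n.
rewrite /chi => /eqP; rewrite -(prim_order_dvd pz) (prim_order_dvd pg0).
by rewrite dlP // => /eqP.
Qed.

Lemma om_nontriv k : ~~ (n %| k)%N -> omega g0 ^+ k != 1.
Proof.
move=> nk; apply: contra nk => /eqP ok; have [m hm] := m0_ex.
rewrite (prim_order_dvd pz) -chi_g0 hm ?g0_neq0 //.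
by rewrite -exprM mulnC exprM ok expr1n.
Qed.

Lemma sum_nz_const (c : algC) : \sum_(x : F | x != 0) c = c *+ n.
Proof. by rewrite sumr_const -(cardC1 (0:F)). Qed.

Lemma O1 y : y != 0 -> \sum_(m < n) omega y ^+ m = if y == 1 then n%:R else 0.
Proof.
move=> y0; case: ifP => [/eqP ->|y1].
  by rewrite om1 (eq_bigr (fun _ => 1)) => [|i _]; rewrite ?expr1n // sumr_const card_ord.
have w1 : omega y - 1 != 0.
  by rewrite subr_eq0; apply/negP => /eqP /(om_faith y0) /eqP; rewrite y1.
have := subrX1 (omega y) n; rewrite omn // subrr => /esym/eqP.
by rewrite mulf_eq0 (negbTE w1) => /eqP.
Qed.

Lemma O2 k : \sum_(x : F | x != 0) omega x ^+ k = if (n %| k)%N then n%:R else 0.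
Proof.
case: ifP => hk.
  rewrite (eq_bigr (fun _ => 1)) ?sum_nz_const // => x x0.
  by move/dvdnP: hk => [q ->]; rewrite mulnC exprM omn // expr1n.
set S := \sum_(x | _) _.
have hS : S * omega g0 ^+ k = S.
  rewrite /S mulr_suml.
  rewrite (eq_bigr (fun x => omega (x * g0) ^+ k)) => [|x x0]; last first.
    by rewrite -exprMn omM ?g0_neq0.
  rewrite (eq_bigl (fun x => x * g0 != 0)) => [|x]; last by rewrite mulf_eq0 (negbTE g0_neq0) orbF.
  by rewrite -(reindex_inj (mulIf g0_neq0) (P := fun x => x != 0) (F := fun x => omega x ^+ k)).
apply/eqP; have := om_nontriv (negbT hk); apply: contraR => S0.
by apply/eqP; apply: (mulfI S0); rewrite hS mulr1.
Qed.

Lemma expz_mod (w : algC) (c : int) : w != 0 -> w ^+ n = 1 ->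
  w ^ c = w ^+ `|(c %% n)%Z|%N.
Proof.
move=> w0 wn; rewrite {1}(divz_eq c n) expfzDr //.
rewrite (mulrC (c %/ n)%Z (n%:Z)) -exprz_exp (_ : w ^ (Posz n) = 1) // exp1rz mul1r.
by rewrite -[in LHS](@gez0_abs (c %% n)%Z) // modz_ge0 // -lt0n n_gt0.
Qed.

Lemma nZ_neq0 : (n%:Z != 0).
Proof. by rewrite -lt0n n_gt0. Qed.

Lemma nZ_gt0 : (0 < n%:Z).
Proof. by rewrite ltz_nat n_gt0. Qed.

Lemma mod_abs_lt (c : int) : (`|(c %% n)%Z| < n)%N.
Proof. by rewrite -ltz_nat gez0_abs ?modz_ge0 ?nZ_neq0 // ltz_pmod // nZ_gt0. Qed.

Lemma dvd_mod_abs (c : int) : (n %| `|(c %% n)%Z|)%N = (n%:Z %| c)%Z.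
Proof.
apply/idP/idP => [h|/dvdz_mod0P ->]; last by rewrite dvdn0.
have k0 : `|(c %% n)%Z|%N = 0%N.
  case: (posnP `|(c %% n)%Z|%N) => // kp.
  by have := dvdn_leq kp h; rewrite leqNgt mod_abs_lt.
by apply/dvdz_mod0P; apply/eqP; rewrite -absz_eq0 k0.
Qed.

Lemma O2z (c : int) : \sum_(x : F | x != 0) omega x ^ c = if (n%:Z %| c)%Z then n%:R else 0.
Proof.
rewrite (eq_bigr (fun x => omega x ^+ `|(c %% n)%Z|)) => [|x x0]; last first.
  by rewrite expz_mod ?om_neq0 ?omn.
by rewrite O2 dvd_mod_abs.
Qed.

Lemma psiD x y : psi (x + y) = psi x * psi y.
Proof. by case: hpsi => [[h _] _]. Qed.

Lemma psi_neq0 x : psi x != 0.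
Proof. by case: hpsi => [[_ h] _]. Qed.

Lemma psi0 : psi 0 = 1.
Proof.
have h := psiD 0 0; rewrite addr0 in h.
by apply: (mulfI (psi_neq0 0)); rewrite -h mulr1.
Qed.

Lemma sum_psi : \sum_(t : F) psi t = 0.
Proof.
case: hpsi => _ [x0 hx0].
set S := \sum_t _.
have hS : S * psi x0 = S.
  rewrite /S mulr_suml (eq_bigr (fun t => psi (t + x0))) => [|t _]; last by rewrite psiD.
  by rewrite -(reindex_inj (addIr x0) (P := xpredT) (F := psi)).
apply/eqP; apply: contraR hx0 => S0.
by apply/eqP; apply: (mulfI S0); rewrite hS mulr1.
Qed.

Lemma A2 u : \sum_(t : F) psi (t * u) = if u == 0 then #|F|%:R else 0.
Proof.
case: ifP => [/eqP ->|/negbT u0].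
  by rewrite (eq_bigr (fun _ => 1)) => [|t _]; rewrite ?mulr0 ?psi0 // sumr_const.
by rewrite -(reindex_inj (mulIf u0) (P := xpredT) (F := psi)) sum_psi.
Qed.

Lemma A3 : \sum_(x : F | x != 0) psi x = -1.
Proof.
have := sum_psi; rewrite (bigD1 0) //= psi0 => /eqP.
by rewrite addrC addr_eq0 => /eqP.
Qed.

Definition Gs (c : int) (u : F) := \sum_(v : F | v != 0) omega v ^ c * psi (u * v).

Lemma G0 c : Gs c 0 = if (n%:Z %| c)%Z then n%:R else 0.
Proof.
rewrite /Gs -O2z; apply: eq_bigr => v _; by rewrite mul0r psi0 mulr1.
Qed.

Lemma Gzero u : Gs 0 u = (if u == 0 then #|F|%:R else 0) - 1.
Proof.
rewrite /Gs -A2 [in RHS](bigD1 0) //= mul0r psi0 addrC addrK.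
by apply: eq_bigr => v _; rewrite expr0z mul1r mulrC.
Qed.

Lemma Gu c u : u != 0 -> Gs c u = gauss omega psi c * omega u ^ (- c).
Proof.
move=> u0; have ou0 := om_neq0 u0.
rewrite -invr_expz; apply: (mulIf (expfz_neq0 c ou0)); rewrite mulfVK ?expfz_neq0 //.
rewrite /Gs /gauss mulr_suml.
rewrite [RHS](reindex_inj (mulfI u0) (P := fun w => w != 0)).
rewrite [RHS](eq_bigl (fun v => v != 0)) => [|v]; last by rewrite mulf_eq0 (negbTE u0).
apply: eq_bigr => v v0; rewrite omM // expfzMl.
by rewrite mulrAC [omega u ^ c * _]mulrC.
Qed.
End Chars.


Lemma prod_expz (F : fieldType) (I : Type) (r : seq I) (P : pred I) (f : I -> int) (c : F) :
  c != 0 -> \prod_(i <- r | P i) c ^ f i = c ^ (\sum_(i <- r | P i) f i).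
Proof. by move=> c0; rewrite (big_morph (fun z => c ^ z) (fun m n => expfzDr m n c0) (expr0z c)). Qed.

Section Part.
Variables (F : finFieldType) (k l : nat) (blk : 'I_k -> 'I_l) (a : 'I_k -> int) (lam eps : F).
Hypothesis hne : forall j : 'I_l, exists i, blk i = j.
Hypothesis hz : forall j : 'I_l, \sum_(i | blk i == j) a i = 0.

Local Notation R := (@proj_equiv F k l blk).
Local Notation D := (Vsol blk a lam eps).

Lemma projP (x y : {ffun 'I_k -> F}) :
  reflect (exists2 c : {ffun 'I_l -> F}, (forall j, c j != 0) & y = [ffun i => c (blk i) * x i])
          (R x y).
Proof.
apply: (iffP existsP) => [[c /andP [/forallP c0 /forallP e]]|[c c0 ->]].
  by exists c => //; apply/ffunP => i; rewrite ffunE; apply/eqP.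
by exists c; apply/andP; split; apply/forallP => // i; rewrite ffunE.
Qed.

Lemma R_refl x : R x x.
Proof.
apply/projP; exists [ffun=> 1] => [j|]; first by rewrite ffunE oner_neq0.
by apply/ffunP => i; rewrite !ffunE mul1r.
Qed.

Lemma R_sym x y : R x y -> R y x.
Proof.
move/projP => [c c0 ->]; apply/projP; exists [ffun j => (c j)^-1] => [j|].
  by rewrite ffunE invr_eq0.
apply/ffunP => i; rewrite !ffunE mulrA mulVf ?mul1r //.
Qed.

Lemma R_trans x y z : R x y -> R y z -> R x z.
Proof.
move/projP => [c c0 ->] /projP [d d0 ->]; apply/projP.
exists [ffun j => d j * c j] => [j|]; first by rewrite ffunE mulf_neq0.
by apply/ffunP => i; rewrite !ffunE mulrA.
Qed.

Lemma R_equiv : equivalence_rel R.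
Proof.
move=> x y z; split; first exact: R_refl.
move=> xy; apply/idP/idP => [xz|yz]; last exact: R_trans xy yz.
exact: R_trans (R_sym xy) xz.
Qed.

Lemma R_D x y : x \in D -> R x y -> y \in D.
Proof.
rewrite !inE => /andP [/andP [/forallP x0 /forallP bs] mono] /projP [c c0 ->].
apply/andP; split; first (apply/andP; split).
- by apply/forallP => i; rewrite ffunE mulf_neq0.
- apply/forallP => j; rewrite (eq_bigr (fun i => c j * x i)) => [|i /eqP <-]; last by rewrite ffunE.
  by rewrite -mulr_sumr (eqP (bs j)) mulr0.
- rewrite (eq_bigr (fun i => c (blk i) ^ a i * x i ^ a i)) => [|i _]; last by rewrite ffunE expfzMl.
  rewrite big_split /= mulrA [lam * _]mulrC -mulrA.
  rewrite (partition_big blk xpredT) //=.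
  rewrite (eq_bigr (fun j => 1)) ?big1_eq ?mul1r // => j _.
  rewrite (eq_bigr (fun i => c j ^ a i)) => [|i /eqP <-] //.
  by rewrite prod_expz // hz expr0z.
Qed.

Lemma class_card x : x \in D -> #|[set y | R x y]| = (#|F|.-1 ^ l)%N.
Proof.
rewrite inE => /andP [/andP [/forallP x0 _] _].
pose C0 := [set c : {ffun 'I_l -> F} | [forall j, c j != 0]].
pose f (c : {ffun 'I_l -> F}) := [ffun i => c (blk i) * x i].
have -> : [set y | R x y] = f @: C0.
  apply/setP => y; rewrite inE; apply/projP/imsetP => [[c c0 ->]|[c]].
    by exists c => //; rewrite inE; apply/forallP.
  by rewrite inE => /forallP c0 ->; exists c.
rewrite card_in_imset => [|c d _ _ e].
  rewrite -(cardC1 (0:F)) -[in RHS](card_ord l) -card_ffun_on.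
  apply: eq_card => c; rewrite inE; apply/forallP/ffun_onP => h j.
    by rewrite !inE h.
  by have := h j; rewrite !inE.
apply/ffunP => j; have [i <-] := hne j.
by have := congr1 (fun g : {ffun 'I_k -> F} => g i) e; rewrite /f !ffunE => /(mulIf (x0 i)).
Qed.

Lemma card_Vsol : #|D| = (#|Vpoints blk a lam eps| * #|F|.-1 ^ l)%N.
Proof.
have eqP : Vpoints blk a lam eps = equivalence_partition R D.
  apply: eq_in_imset => x xD; apply/setP => y; rewrite !inE.
  case e: (R x y); rewrite ?andbF //; have := R_D xD e; by rewrite inE => ->.
apply: card_uniform_partition.
  move=> A /imsetP [x xD ->]; exact: class_card.
rewrite eqP; apply: equivalence_partitionP => x y z _ _ _; exact: R_equiv.
Qed.
End Part.


Lemma prod_block (R : comPzRingType) k l (blk : 'I_k -> 'I_l) (f : 'I_k -> R) :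
  \prod_i f i = \prod_j \prod_(i | blk i == j) f i.
Proof. by rewrite (partition_big blk xpredT). Qed.

Lemma sum_block (F : finType) k l (blk : 'I_k -> 'I_l) (f : 'I_k -> F -> algC) :
  \sum_(t : {ffun 'I_l -> F}) \prod_i f i (t (blk i)) =
  \prod_j \sum_u \prod_(i | blk i == j) f i u.
Proof.
rewrite bigA_distr_bigA; apply: eq_bigr => t _.
rewrite (prod_block blk); apply: eq_bigr => j _.
by apply: eq_bigr => i /eqP ->.
Qed.

Lemma prod_ifq l (b : 'I_l -> bool) (c : algC) :
  \prod_j (if b j then c else 0) = if [forall j, b j] then c ^+ l else 0.
Proof.
case: forallP => [h|/forallP]; first by rewrite (eq_bigr (fun _ => c)) ?prodr_const ?card_ord // => j _; rewrite h.
rewrite negb_forall => /existsP [j bj].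
by rewrite (bigD1 j) //= (negbTE bj) mul0r.
Qed.

Lemma om_prod (F : finFieldType) (omega : F -> algC) (homega : generates_char_group omega)
  (I : Type) (r : seq I) (P : pred I) (f : I -> F) :
  (forall i, P i -> f i != 0) ->
  omega (\prod_(i <- r | P i) f i) = \prod_(i <- r | P i) omega (f i).
Proof.
move=> h.
suff [] : (\prod_(i <- r | P i) f i != 0) /\
          omega (\prod_(i <- r | P i) f i) = \prod_(i <- r | P i) omega (f i) by [].
apply: (big_rec2 (fun y1 y2 => y1 != 0 /\ omega y1 = y2)).
  by split; [exact: oner_neq0 | exact: (om1 homega)].
move=> i y1 y2 Pi [y10 <-]; split; first by rewrite mulf_neq0 ?h.
by rewrite (omM homega) ?h.
Qed.

Section Main.
Variables (F : finFieldType) (psi omega : F -> algC).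
Hypothesis hpsi : nontriv_add_char psi.
Hypothesis homega : generates_char_group omega.
Variables (k l : nat) (blk : 'I_k -> 'I_l) (a : 'I_k -> int) (lam eps : F).
Hypothesis hne : forall j : 'I_l, exists i, blk i = j.
Hypothesis hz : forall j : 'I_l, \sum_(i | blk i == j) a i = 0.
Hypothesis hg : forall j : 'I_l, \big[gcdn/0%N]_(i | blk i == j) `|a i|%N = 1%N.
Hypothesis hlam : lam != 0.
Hypothesis heps : eps * eps = 1.

Local Notation n := #|F|.-1.
Local Notation D := (Vsol blk a lam eps).
Local Notation q := (#|F|%:R : algC).

Definition H (m : nat) (t : {ffun 'I_l -> F}) (i : 'I_k) (v : F) : algC :=
  if v != 0 then omega v ^ (a i * m%:Z) * psi (t (blk i) * v) else 0.

Lemma eps_neq0 : eps != 0.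
Proof. by apply/eqP => e0; move: heps; rewrite e0 mul0r => /eqP; rewrite eq_sym oner_eq0. Qed.

Lemma S1 (x : {ffun 'I_k -> F}) : (forall i, x i != 0) ->
  \sum_(m < n) omega (eps * lam) ^+ m * \prod_i omega (x i) ^ (a i * m%:Z) =
  if lam * \prod_i x i ^ a i == eps then n%:R else 0.
Proof.
move=> x0.
have p0 : \prod_i x i ^ a i != 0.
  by apply/prodf_neq0 => i _; rewrite expfz_neq0.
have y0 : eps * (lam * \prod_i x i ^ a i) != 0 by rewrite !mulf_neq0 ?eps_neq0.
have -> : (lam * \prod_i x i ^ a i == eps) = (eps * (lam * \prod_i x i ^ a i) == 1).
  apply/eqP/eqP => [->|h] //.
  by have := congr1 (fun z => eps * z) h; rewrite mulrA heps mul1r mulr1.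
rewrite -(O1 homega y0); apply: eq_bigr => m _.
rewrite mulrA [in RHS](omM homega) ?mulf_neq0 ?eps_neq0 // [in RHS]exprMn; congr (_ * _).
rewrite (om_prod homega) => [|i _]; last by rewrite expfz_neq0.
rewrite -prodrXl; apply: eq_bigr => i _.
by rewrite (omz homega) // -(exprz_exp _ _ (Posz m)).
Qed.

Lemma psi_sum (I : Type) (r : seq I) (P : pred I) (f : I -> F) :
  psi (\sum_(i <- r | P i) f i) = \prod_(i <- r | P i) psi (f i).
Proof. exact: (big_morph psi (psiD hpsi) (psi0 hpsi)). Qed.

Lemma S2 (x : {ffun 'I_k -> F}) :
  \sum_(t : {ffun 'I_l -> F}) \prod_i psi (t (blk i) * x i) =
  if [forall j, \sum_(i | blk i == j) x i == 0] then q ^+ l else 0.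
Proof.
rewrite (sum_block blk (fun i u => psi (u * x i))) -prod_ifq; apply: eq_bigr => j _.
rewrite -(A2 hpsi); apply: eq_bigr => u _.
by rewrite mulr_sumr psi_sum.
Qed.

Lemma nR_neq0 : (n%:R : algC) != 0.
Proof. by rewrite pnatr_eq0 -lt0n n_gt0. Qed.

Lemma q_neq0 : q != 0.
Proof. by rewrite pnatr_eq0 cardF. Qed.

Lemma E2 x : (x \in D)%:R = (n%:R * q ^+ l)^-1 *
  \sum_(m < n) \sum_(t : {ffun 'I_l -> F}) omega (eps * lam) ^+ m * \prod_i H m t i (x i).
Proof.
case: (boolP [forall i, x i != 0]) => [/forallP x0|nx0]; last first.
  have -> : x \in D = false by rewrite inE (negbTE nx0).
  move: nx0; rewrite negb_forall => /existsP [i0]; rewrite negbK => xi0.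
  rewrite big1 ?mulr0 // => m _; rewrite big1 // => t _.
  by rewrite (bigD1 i0) //= /H xi0 /= mul0r mulr0.
rewrite (eq_bigr (fun m : 'I_n => (omega (eps * lam) ^+ m * \prod_i omega (x i) ^ (a i * m%:Z)) *
   \sum_(t : {ffun 'I_l -> F}) \prod_i psi (t (blk i) * x i))); last first.
  move=> m _; rewrite mulr_sumr; apply: eq_bigr => t _.
  rewrite -mulrA; congr (_ * _); rewrite -big_split /=; apply: eq_bigr => i _.
  by rewrite /H x0.
rewrite -mulr_suml S1 // S2 inE.
have -> : [forall i, x i != 0] by apply/forallP.
rewrite /=.
by case: ifP => _; case: ifP => _; rewrite /= ?(mulr0, mul0r) // mulVf // mulf_neq0 ?nR_neq0 // expf_neq0 // q_neq0.
Qed.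

Lemma E3 : (#|D|)%:R = (n%:R * q ^+ l)^-1 * \sum_(m < n) omega (eps * lam) ^+ m *
   \prod_j \sum_u \prod_(i | blk i == j) Gs psi omega (a i * m%:Z) u.
Proof.
have -> : (#|D|)%:R = \sum_x (x \in D)%:R :> algC.
  rewrite -sum1_card natr_sum big_mkcond /=; apply: eq_bigr => x _.
  by case: (x \in D).
under eq_bigr do rewrite E2.
rewrite -mulr_sumr; congr (_ * _).
rewrite exchange_big; apply: eq_bigr => m _.
rewrite exchange_big /=.
rewrite -(sum_block blk (fun i u => Gs psi omega (a i * m%:Z) u)) mulr_sumr.
apply: eq_bigr => t _; rewrite -mulr_sumr; congr (_ * _).
rewrite -bigA_distr_bigA; apply: eq_bigr => i _.
by rewrite /H /Gs [RHS]big_mkcond.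
Qed.

Lemma qn : q - 1 = n%:R.
Proof. by rewrite [in LHS]cardF mulrS addrC addrK. Qed.

Lemma prod_const_blk j (c : algC) :
  \prod_(i | blk i == j) c = c ^+ #|[set i | blk i == j]|.
Proof. by rewrite (eq_bigl (fun i => i \in [set i | blk i == j])) ?prodr_const // => i; rewrite inE. Qed.

Lemma Bm0 j : \sum_u \prod_(i | blk i == j) Gs psi omega (a i * 0%:Z) u =
  n%:R ^+ #|[set i | blk i == j]| + n%:R * (-1) ^+ #|[set i | blk i == j]|.
Proof.
rewrite (eq_bigr (fun u => ((if u == 0 then q else 0) - 1) ^+ #|[set i | blk i == j]|)) => [|u _]; last first.
  by rewrite -prod_const_blk; apply: eq_bigr => i _; rewrite mulr0 (Gzero omega hpsi).
rewrite (bigD1 0) //= eqxx qn; congr (_ + _).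
rewrite (eq_bigr (fun _ => (-1) ^+ #|[set i | blk i == j]|)) => [|u /negbTE ->]; last by rewrite sub0r.
by rewrite sum_nz_const mulr_natl.
Qed.

Lemma Bm j (m : nat) : (0 < m < n)%N ->
  \sum_u \prod_(i | blk i == j) Gs psi omega (a i * m%:Z) u =
  n%:R * \prod_(i | blk i == j) gauss omega psi (a i * m%:Z).
Proof.
case/andP => m0 mn.
rewrite (bigD1 0) //=.
have -> : \prod_(i | blk i == j) Gs psi omega (a i * m%:Z) 0 = 0.
  have [i /andP [bi ndi]] : exists i, (blk i == j) && ~~ (n%:Z %| a i * m%:Z)%Z.
    apply/existsP; apply: contraT; rewrite negb_exists => /forallP h.
    have : (n %| \big[gcdn/0%N]_(i | blk i == j) `|a i|%N * m)%N.
      apply: (big_ind (fun g => n %| g * m)%N).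
      - by rewrite mul0n dvdn0.
      - by move=> x y hx hy; rewrite muln_gcdl dvdn_gcd hx hy.
      - move=> i bi; have := h i; rewrite bi /= negbK dvdzE abszM.
        by [].
    rewrite hg mul1n => nm.
    by have := dvdn_leq m0 nm; rewrite leqNgt mn.
  by rewrite (bigD1 i) //= (G0 hpsi homega) (negbTE ndi) mul0r.
rewrite add0r.
rewrite (eq_bigr (fun _ => \prod_(i | blk i == j) gauss omega psi (a i * m%:Z))) => [|u u0].
  by rewrite sum_nz_const mulr_natl.
rewrite (eq_bigr (fun i => gauss omega psi (a i * m%:Z) * omega u ^ (- (a i * m%:Z)))) => [|i _]; last first.
  by rewrite (Gu psi homega).
rewrite big_split /= prod_expz ?(om_neq0 homega) //.
rewrite sumrN -mulr_suml hz mul0r oppr0 expr0z mulr1 //.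
Qed.

Lemma P0 : \prod_j \sum_u \prod_(i | blk i == j) Gs psi omega (a i * 0%:Z) u =
  (n%:R * q) ^+ l * \prod_(j < l) Qpoly #|[set i | blk i == j]| q.
Proof.
have -> : (n%:R * q) ^+ l = \prod_(j < l) (n%:R * q) by rewrite prodr_const card_ord.
rewrite -big_split /=; apply: eq_bigr => j _.
rewrite Bm0 /Qpoly qn.
have : (0 < #|[set i | blk i == j]|)%N.
  by have [i bi] := hne j; apply/card_gt0P; exists i; rewrite inE bi.
case: #|[set i | blk i == j]| => // nj _ /=.
have q0 := q_neq0; rewrite exprS /=; field; exact: q0.
Qed.

Lemma Pm (m : nat) : (0 < m < n)%N ->
  \prod_j \sum_u \prod_(i | blk i == j) Gs psi omega (a i * m%:Z) u =
  n%:R ^+ l * \prod_(i < k) gauss omega psi (a i * m%:Z).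
Proof.
move=> hm; have -> : (n%:R : algC) ^+ l = \prod_(j < l) n%:R by rewrite prodr_const card_ord.
rewrite (prod_block blk) -big_split /=.
by apply: eq_bigr => j _; rewrite Bm.
Qed.

Lemma final_eq : (#|Vpoints blk a lam eps|)%:R =
  (\prod_(j < l) Qpoly #|[set i | blk i == j]| q) / (q - 1)
  + (\sum_(1 <= m < #|F|.-2.+1)
       (\prod_(i < k) gauss omega psi (a i * m%:Z)) * omega (eps * lam) ^+ m)
    / (q ^+ l * (q - 1)).
Proof.
have hV : (#|Vpoints blk a lam eps|)%:R = (#|D|)%:R / n%:R ^+ l :> algC.
  by rewrite (@card_Vsol F k l blk a lam eps hne hz) natrM natrX mulfK // expf_neq0 // nR_neq0.
have e2 : #|F|.-2.+1 = n by rewrite [in LHS]cardF /= prednK // n_gt0.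
have split : forall f : nat -> algC, \sum_(m < n) f m = f 0%N + \sum_(1 <= m < n) f m.
  by move=> f; rewrite -(@big_ltn _ _ _ 0 n f (n_gt0 F)) big_mkord.
rewrite hV E3 (split (fun m => omega (eps * lam) ^+ m *
   \prod_j \sum_u \prod_(i | blk i == j) Gs psi omega (a i * m%:Z) u)) /= P0 qn e2 expr0 mul1r.
have -> : \sum_(1 <= m < n) omega (eps * lam) ^+ m *
     \prod_j \sum_u \prod_(i | blk i == j) Gs psi omega (a i * m%:Z) u =
   n%:R ^+ l * \sum_(1 <= m < n) (\prod_(i < k) gauss omega psi (a i * m%:Z)) * omega (eps * lam) ^+ m.
  rewrite mulr_sumr; apply: eq_big_nat => m hm.
  by rewrite Pm //; ring.
set S := \sum_(1 <= m < n) _.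
rewrite exprMn.
have n0 := nR_neq0; have q0 := q_neq0.
have X0 : (n%:R : algC) ^+ l != 0 by rewrite expf_neq0.
have Y0 : q ^+ l != 0 by rewrite expf_neq0.
move: X0 Y0; set X := (n%:R : algC) ^+ l; set Y := q ^+ l => X0 Y0.
field.
by rewrite n0 X0 Y0.
Qed.
End Main.

Unset Implicit Arguments.
Theorem mainTheorem17 (F : finFieldType) (psi omega : F -> algC)
  (hpsi : nontriv_add_char psi) (homega : generates_char_group omega)
  (r s : nat) (p : 'I_r -> nat) (qs : 'I_s -> nat)
  (hp : forall i, (0 < p i)%N) (hq : forall j, (0 < qs j)%N)
  (hsum : (\sum_i p i)%N = (\sum_j qs j)%N)
  (l : nat) (blk : 'I_(r + s) -> 'I_l)
  (hne : forall j : 'I_l, exists i, blk i = j)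
  (hz : forall j : 'I_l, \sum_(i | blk i == j) avec p qs i = 0)
  (hg : forall j : 'I_l, \big[gcdn/0%N]_(i | blk i == j) `|avec p qs i|%N = 1%N)
  (lam : F) (hlam : lam != 0) :
  let eps : F := (-1) ^+ (\sum_j qs j)%N in
  let qC : algC := (#|F|)%:R in
  (#|Vpoints blk (avec p qs) lam eps|)%:R =
    (\prod_(j < l) Qpoly #|[set i | blk i == j]| qC) / (qC - 1)
    + (\sum_(1 <= m < #|F|.-2.+1)
         (\prod_(i < r + s) gauss omega psi (avec p qs i * m%:Z)) * omega (eps * lam) ^+ m)
      / (qC ^+ l * (qC - 1)).
Proof.
move=> eps qC.
have heps : eps * eps = 1 by rewrite /eps -exprMn mulrNN mulr1 expr1n.
exact: (final_eq hpsi homega hne hz hg hlam heps).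
Qed.
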